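(* Assume the following data: (A1) an associative unital $*$-algebra $\mathcal A$ over $\mathbb C$; (A2) an $\mathcal A$-bimodule $\Omega^1$; (A3) a $\mathbb C$-linear derivation $d:\mathcal A\to\Omega^1$; (A4) a map $\omega:\Omega^1\times\overline{\Omega^1}\to\mathbb C$, linear in both slots, with $\omega(\alpha,\overline\beta)=\overline{\omega(\beta,\overline\alpha)}$, $\omega(f\alpha g,\overline\beta)=\omega(\alpha,\overline{f^*\beta g^*})$ for $f,g\in\mathcal A$, and $\omega(\alpha,\overline\alpha)>0$ for $\alpha\neq0$; (A5) a linear functional $\eta:\mathcal A\to\mathbb C$ with $\eta(f^* )=-\overline{\eta(f)}$ and $\eta([f,g])=\frac{-1}{2\sqrt{-1}}\big(\omega(df,\overline{d(g^* )})-\omega(dg,\overline{d(f^* )})\big)$ for all $f,g$. Fix $n\ge1$. Let $M:=\mathrm{Mat}(n\times n,\Omega^1)$ (the affine space of connections $\phi\mapsto d\phi+\phi A$ on the free module $\mathcal A^n$ of row vectors) and $\mathfrak k:=\{u=(u_{ij})\in\mathrm{Mat}(n\times n,\mathcal A): u_{ij}^*=-u_{ji}\ \forall i,j\}$, a real Lie algebra under the commutator. For $u\in\mathfrak k$, $A\in M$ let $du:=(du_{ij})$, $[u,A]:=uA-Au$ (matrix products using the bimodule actions), and $X_u|_A:=du+[u,A]\in M$. Define on $M$ (viewed as a real vector space) $\omega_0(B,\overline C):=\sum_{i,j}\omega(B_{ij},\overline{C_{ij}})$, $\omega^{symp}(B,C):=\operatorname{Im}\omega_0(B,\overline C)$,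 and $$H_u(A):=\eta(\operatorname{Trace}u)-\omega^{symp}(A,du)+\tfrac12\,\omega^{symp}(A,[A,u]).$$ Then $u\mapsto H_u$ is a Lie algebra homomorphism lifting the action $u\mapsto X_u$; that is, for all $u,u_1,u_2\in\mathfrak k$ and $A,B\in M$: (i) $\frac{d}{dt}\big|_{t=0}H_u(A+tB)=\omega^{symp}(X_u|_A,B)$ (so $X_u$ is the Hamiltonian vector field of $H_u$ for the constant symplectic form $\omega^{symp}$), and (ii) $\omega^{symp}(X_{u_1}|_A,X_{u_2}|_A)=H_{[u_1,u_2]}(A)$, i.e. $H_{[u_1,u_2]}=\{H_{u_1},H_{u_2}\}$ for the Poisson bracket of $\omega^{symp}$.
   Context: $\overline{\Omega^1}$ denotes the complex-conjugate vector space of $\Omega^1$ (elements $\overline\beta$, $\overline{\lambda\beta}=\bar\lambda\overline\beta$). $\operatorname{Trace}u=\sum_i u_{ii}\in\mathcal A$. *)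

(* Defs.v *)
From HB Require Import structures.
From mathcomp Require Import all_boot all_order all_algebra.
From mathcomp Require Import complex.
From mathcomp Require Import all_classical all_reals all_analysis.
Set Implicit Arguments. Unset Strict Implicit. Unset Printing Implicit Defensive.
Import Order.TTheory GRing.Theory Num.Theory.
Local Open Scope ring_scope.

Section Defs.
Variable R : realType.
Local Notation C := (R[i]).

Definition is_star (A : algType C) (star : A -> A) : Prop :=
  [/\ forall a b, star (a + b) = star a + star b,
      forall (c : C) a, star (c *: a) = c^* *: star a,
      forall a b, star (a * b) = star b * star a
    & forall a, star (star a) = a].

Definition is_bimodule (A : algType C) (Om : lmodType C)
  (la : A -> Om -> Om) (ra : Om -> A -> Om) : Prop :=
  (forall a x y, la a (x + y) = la a x + la a y) /\
      (forall a b x, la (a + b) x = la a x + la b x) /\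
      (forall a b x, la (a * b) x = la a (la b x)) /\
      (forall x, la 1 x = x) /\
      (forall a x y, ra (x + y) a = ra x a + ra y a) /\
      (forall a b x, ra x (a + b) = ra x a + ra x b) /\
      (forall a b x, ra x (a * b) = ra (ra x a) b) /\
      (forall x, ra x 1 = x) /\
      (forall a b x, ra (la a x) b = la a (ra x b)) /\
      (forall (c : C) a x, la (c *: a) x = c *: la a x /\ la a (c *: x) = c *: la a x) /\
      (forall (c : C) a x, ra x (c *: a) = c *: ra x a /\ ra (c *: x) a = c *: ra x a).

Definition is_derivation (A : algType C) (Om : lmodType C)
  (la : A -> Om -> Om) (ra : Om -> A -> Om) (d : A -> Om) : Prop :=
  [/\ forall a b, d (a + b) = d a + d b,
      forall (c : C) a, d (c *: a) = c *: d a
    & forall a b, d (a * b) = ra (d a) b + la a (d b)].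

(* (A4) omega alpha beta stands for omega(alpha, conj beta), beta in the
   complex-conjugate space; linearity in the conjugate slot is antilinearity in beta *)
Definition is_omega (A : algType C) (star : A -> A) (Om : lmodType C)
  (la : A -> Om -> Om) (ra : Om -> A -> Om) (omega : Om -> Om -> C) : Prop :=
  (forall x y z, omega (x + y) z = omega x z + omega y z) /\
      (forall (c : C) x z, omega (c *: x) z = c * omega x z) /\
      (forall x y z, omega z (x + y) = omega z x + omega z y) /\
      (forall (c : C) x z, omega z (c *: x) = c^* * omega z x) /\
      (forall x y, omega x y = (omega y x)^*) /\
      (forall f g x y, omega (ra (la f x) g) y = omega x (ra (la (star f) y) (star g))) /\
      (forall x, x != 0 -> 0 < omega x x).

Definition is_eta (A : algType C) (star : A -> A) (Om : lmodType C)
  (d : A -> Om) (omega : Om -> Om -> C) (eta : A -> C) : Prop :=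
  [/\ (forall a b, eta (a + b) = eta a + eta b),
      (forall (c : C) a, eta (c *: a) = c * eta a),
      (forall f, eta (star f) = - (eta f)^*)
    & (forall f g, eta (f * g - g * f) =
         (- 1) / (2%:R * ('i)%C) * (omega (d f) (d (star g)) - omega (d g) (d (star f))))].

Variables (A : algType C) (star : A -> A) (Om : lmodType C)
  (la : A -> Om -> Om) (ra : Om -> A -> Om) (d : A -> Om)
  (omega : Om -> Om -> C) (eta : A -> C) (n : nat).

Definition in_k (u : 'M[A]_n) : Prop := forall i j, star (u i j) = - u j i.
Definition commA (u v : 'M[A]_n) : 'M[A]_n := u *m v - v *m u.

Definition dM (u : 'M[A]_n) : 'M[Om]_n := \matrix_(i, j) d (u i j).
Definition lmulM (u : 'M[A]_n) (B : 'M[Om]_n) : 'M[Om]_n :=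
  \matrix_(i, j) \sum_k la (u i k) (B k j).
Definition rmulM (B : 'M[Om]_n) (u : 'M[A]_n) : 'M[Om]_n :=
  \matrix_(i, j) \sum_k ra (B i k) (u k j).
Definition brkUM (u : 'M[A]_n) (B : 'M[Om]_n) : 'M[Om]_n := lmulM u B - rmulM B u.
Definition brkMU (B : 'M[Om]_n) (u : 'M[A]_n) : 'M[Om]_n := rmulM B u - lmulM u B.

Definition Xvf (u : 'M[A]_n) (B : 'M[Om]_n) : 'M[Om]_n := dM u + brkUM u B.

Definition rscaleM (t : R) (B : 'M[Om]_n) : 'M[Om]_n := \matrix_(i, j) ((t%:C)%C *: B i j).

Definition omega0 (B D : 'M[Om]_n) : C := \sum_i \sum_j omega (B i j) (D i j).
Definition osymp (B D : 'M[Om]_n) : R := complex.Im (omega0 B D).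

Definition Ham (u : 'M[A]_n) (B : 'M[Om]_n) : C :=
  eta (\tr u) - ((osymp B (dM u))%:C)%C + (1/2%:R : C) * ((osymp B (brkMU B u))%:C)%C.
End Defs.

(* Main.v *)
Require Import Defs.
From HB Require Import structures.
From mathcomp Require Import all_boot all_order all_algebra.
From mathcomp Require Import complex.
From mathcomp Require Import all_classical all_reals all_analysis.
Import Order.TTheory GRing.Theory Num.Theory.
Local Open Scope ring_scope.
From mathcomp Require Import ring lra.
Section S.
Variable R : realType.
Local Notation C := (R[i]).
Lemma ImD (x y : C) : complex.Im (x + y) = complex.Im x + complex.Im y.
Proof. by case: x; case: y. Qed.
Lemma ImN (x : C) : complex.Im (- x) = - complex.Im x.
Proof. by case: x. Qed.
Lemma ImJ (x : C) : complex.Im (x^*) = - complex.Im x.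
Proof. by case: x. Qed.
Lemma ImRM (r : R) (x : C) : complex.Im ((r%:C)%C * x) = r * complex.Im x.
Proof. case: x => a b /=. by rewrite !mul0r addr0. Qed.
Lemma Imr (r : R) : complex.Im ((r%:C)%C) = 0.
Proof. by []. Qed.
Lemma Rer (r : R) : complex.Re ((r%:C)%C) = r.
Proof. by []. Qed.
Lemma ReD (x y : C) : complex.Re (x + y) = complex.Re x + complex.Re y.
Proof. by case: x; case: y. Qed.
Lemma ReN (x : C) : complex.Re (- x) = - complex.Re x.
Proof. by case: x. Qed.
Lemma ReRM (r : R) (x : C) : complex.Re ((r%:C)%C * x) = r * complex.Re x.
Proof. case: x => a b /=. by rewrite !mul0r subr0. Qed.
End S.
Lemma cst_im (R : realType) (z : R[i]) : (-1)/(2%:R * 'i%C) * (z^* - z) = ((complex.Im z)%:C)%C.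
Proof.
have e : z^* = (z^*)%C by [].
rewrite e.
have ii : 'i%C * 'i%C = -1 :> R[i] by rewrite -expr2 sqr_i.
have hi : (-1)/(2%:R * 'i%C) = ('i%C / 2%:R :> R[i]).
  apply: (mulIf (x := 2%:R * 'i%C)).
    by rewrite mulf_neq0 // ?pnatr_eq0 // -normr_eq0 normCi oner_eq0.
  rewrite mulfVK; last by rewrite mulf_neq0 // ?pnatr_eq0 // -normr_eq0 normCi oner_eq0.
  rewrite mulrCA mulrAC ii.
  by rewrite mulrC mulfVK // pnatr_eq0.
rewrite hi ImJ_sub.
by rewrite [RHS]mulrC mulrA mulrAC.
Qed.
Lemma half (R : realType) : (1/2%:R : R[i]) = ((1/2 : R)%:C)%C.
Proof.
apply/eqP; rewrite eq_complex /=.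
apply/andP; split; apply/eqP; rewrite !addr0 mul0r ?subr0 ?mul0r ?oppr0 ?mulr0 ?addr0 //.
rewrite expr0n /= addr0 mul1r. by field.
Qed.
Lemma cplx3 (R : realType) (x y z : R) : ((x%:C - y%:C + (1/2%:R) * z%:C)%C : R[i]) = ((x - y + z / 2)%:C)%C.
Proof.
rewrite half; apply/eqP; rewrite eq_complex /=.
apply/andP; split; apply/eqP; try lra. 
Qed.
Lemma polyd (R : realType) (K g1 g2 : R) :
  is_derive (0:R) (1:R) (fun t : R => K + t * g1 + t * t * g2) g1.
Proof.
have -> : (fun t : R => K + t * g1 + t * t * g2) = (cst K + id * cst g1 + (id * id) * cst g2) :> (R -> R).
  by apply/funext => t.
apply: is_derive_eq. rewrite /cst /=. rewrite !(scaler0, add0r, addr0, scale0r); exact: mulr1.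
Qed.
Lemma ReH (R : realType) (e : R[i]) (x y : R) :
  complex.Re (e - (x%:C)%C + (1/2%:R) * (y%:C)%C) = complex.Re e - x + y / 2.
Proof. rewrite half; case: e => ea eb /=. lra. Qed.
Lemma ImH (R : realType) (e : R[i]) (x y : R) :
  complex.Im (e - (x%:C)%C + (1/2%:R) * (y%:C)%C) = complex.Im e.
Proof. rewrite half; case: e => ea eb /=. lra. Qed.
Lemma polyd' (R : realType) (K g1 g2 df : R) : g1 = df ->
  is_derive (0:R) (1:R) (fun t : R => K + t * g1 + t * t * g2) df.
Proof. by move=> <-; exact: polyd. Qed.
Section Main.
Variable R : realType.
Local Notation C := (R[i]).
Variables (A : algType C) (star : A -> A) (Om : lmodType C)
  (la : A -> Om -> Om) (ra : Om -> A -> Om) (d : A -> Om)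
  (omega : Om -> Om -> C) (eta : A -> C) (n : nat).
Hypotheses (hstar : is_star star) (hbim : is_bimodule la ra)
  (hd : is_derivation la ra d) (hom : is_omega star la ra omega)
  (heta : is_eta star d omega eta).

Let starD : forall a b, star (a + b) = star a + star b. Proof. by case: hstar. Qed.
Let starM : forall a b, star (a * b) = star b * star a. Proof. by case: hstar. Qed.
Let starK : forall a, star (star a) = a. Proof. by case: hstar. Qed.
Let star0 : star 0 = 0.
Proof. by apply: (addrI (star 0)); rewrite -starD !addr0. Qed.
Let starN a : star (- a) = - star a.
Proof. by apply: (addrI (star a)); rewrite -starD !subrr star0. Qed.
Let star1 : star 1 = 1.
Proof. by rewrite -[LHS]mulr1 -{2}(starK 1) -starM mulr1 starK. Qed.

Let laDr : forall a x y, la a (x + y) = la a x + la a y. Proof. by case: hbim. Qed.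
Let laDl : forall a b x, la (a + b) x = la a x + la b x. Proof. by case: hbim => [_ []]. Qed.
Let laM : forall a b x, la (a * b) x = la a (la b x). Proof. by case: hbim => [_ [_ []]]. Qed.
Let la1 : forall x, la 1 x = x. Proof. by case: hbim => [_ [_ [_ []]]]. Qed.
Let raDl : forall a x y, ra (x + y) a = ra x a + ra y a. Proof. by case: hbim => [_ [_ [_ [_ []]]]]. Qed.
Let raDr : forall a b x, ra x (a + b) = ra x a + ra x b. Proof. by case: hbim => [_ [_ [_ [_ [_ []]]]]]. Qed.
Let raM : forall a b x, ra x (a * b) = ra (ra x a) b. Proof. by case: hbim => [_ [_ [_ [_ [_ [_ []]]]]]]. Qed.
Let ra1 : forall x, ra x 1 = x. Proof. by case: hbim => [_ [_ [_ [_ [_ [_ [_ []]]]]]]]. Qed.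
Let lara : forall a b x, ra (la a x) b = la a (ra x b). Proof. by case: hbim => [_ [_ [_ [_ [_ [_ [_ [_ []]]]]]]]]. Qed.

Let la0r a : la a 0 = 0.
Proof. by apply: (addrI (la a 0)); rewrite -laDr !addr0. Qed.
Let la0l x : la 0 x = 0.
Proof. by apply: (addrI (la 0 x)); rewrite -laDl !addr0. Qed.
Let ra0r a : ra 0 a = 0.
Proof. by apply: (addrI (ra 0 a)); rewrite -raDl !addr0. Qed.
Let ra0l x : ra x 0 = 0.
Proof. by apply: (addrI (ra x 0)); rewrite -raDr !addr0. Qed.
Let laNr a x : la a (- x) = - la a x.
Proof. by apply: (addrI (la a x)); rewrite -laDr !subrr la0r. Qed.
Let laNl a x : la (- a) x = - la a x.
Proof. by apply: (addrI (la a x)); rewrite -laDl !subrr la0l. Qed.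
Let raNr a x : ra x (- a) = - ra x a.
Proof. by apply: (addrI (ra x a)); rewrite -raDr !subrr ra0l. Qed.
Let raNl a x : ra (- x) a = - ra x a.
Proof. by apply: (addrI (ra x a)); rewrite -raDl !subrr ra0r. Qed.

Let la_sumr I r (P : pred I) a (F : I -> Om) :
  la a (\sum_(i <- r | P i) F i) = \sum_(i <- r | P i) la a (F i).
Proof. exact: (big_morph _ (laDr a) (la0r a)). Qed.
Let la_suml I r (P : pred I) x (F : I -> A) :
  la (\sum_(i <- r | P i) F i) x = \sum_(i <- r | P i) la (F i) x.
Proof. exact: (big_morph (fun a => la a x) (fun a b => laDl a b x) (la0l x)). Qed.
Let ra_suml I r (P : pred I) a (F : I -> Om) :
  ra (\sum_(i <- r | P i) F i) a = \sum_(i <- r | P i) ra (F i) a.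
Proof. exact: (big_morph (fun x => ra x a) (raDl a) (ra0r a)). Qed.
Let ra_sumr I r (P : pred I) x (F : I -> A) :
  ra x (\sum_(i <- r | P i) F i) = \sum_(i <- r | P i) ra x (F i).
Proof. exact: (big_morph (ra x) (fun a b => raDr a b x) (ra0l x)). Qed.

Let dD : forall a b, d (a + b) = d a + d b. Proof. by case: hd. Qed.
Let dM' : forall a b, d (a * b) = ra (d a) b + la a (d b). Proof. by case: hd. Qed.
Let d0 : d 0 = 0.
Proof. by apply: (addrI (d 0)); rewrite -dD !addr0. Qed.
Let dN a : d (- a) = - d a.
Proof. by apply: (addrI (d a)); rewrite -dD !subrr d0. Qed.
Let d_sum I r (P : pred I) (F : I -> A) :
  d (\sum_(i <- r | P i) F i) = \sum_(i <- r | P i) d (F i).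
Proof. exact: (big_morph d dD d0). Qed.

Let omDl : forall x y z, omega (x + y) z = omega x z + omega y z. Proof. by case: hom. Qed.
Let omZl : forall (c : C) x z, omega (c *: x) z = c * omega x z. Proof. by case: hom => [_ []]. Qed.
Let omDr : forall x y z, omega z (x + y) = omega z x + omega z y. Proof. by case: hom => [_ [_ []]]. Qed.
Let omZr : forall (c : C) x z, omega z (c *: x) = c^* * omega z x. Proof. by case: hom => [_ [_ [_ []]]]. Qed.
Let omC : forall x y, omega x y = (omega y x)^*. Proof. by case: hom => [_ [_ [_ [_ []]]]]. Qed.
Let omA : forall f g x y, omega (ra (la f x) g) y = omega x (ra (la (star f) y) (star g)).
Proof. by case: hom => [_ [_ [_ [_ [_ []]]]]]. Qed.

Let om0l z : omega 0 z = 0.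
Proof. by apply: (addrI (omega 0 z)); rewrite -omDl !addr0. Qed.
Let om0r z : omega z 0 = 0.
Proof. by apply: (addrI (omega z 0)); rewrite -omDr !addr0. Qed.
Let omNl x z : omega (- x) z = - omega x z.
Proof. by apply: (addrI (omega x z)); rewrite -omDl !subrr om0l. Qed.
Let omNr x z : omega z (- x) = - omega z x.
Proof. by apply: (addrI (omega z x)); rewrite -omDr !subrr om0r. Qed.
Let om_suml I r (P : pred I) z (F : I -> Om) :
  omega (\sum_(i <- r | P i) F i) z = \sum_(i <- r | P i) omega (F i) z.
Proof. exact: (big_morph (fun x => omega x z) (fun x y => omDl x y z) (om0l z)). Qed.
Let om_sumr I r (P : pred I) z (F : I -> Om) :
  omega z (\sum_(i <- r | P i) F i) = \sum_(i <- r | P i) omega z (F i).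
Proof. exact: (big_morph (omega z) (fun x y => omDr x y z) (om0r z)). Qed.
Let om_la f x y : omega (la f x) y = omega x (la (star f) y).
Proof. by rewrite -[la f x]ra1 omA star1 ra1. Qed.
Let om_ra g x y : omega (ra x g) y = omega x (ra y (star g)).
Proof. by rewrite -[x in LHS]la1 omA star1 la1. Qed.

Local Notation W := (@omega0 R Om omega n).
Local Notation S := (@osymp R Om omega n).
Local Notation LM := (@lmulM R A Om la n).
Local Notation RM := (@rmulM R A Om ra n).
Local Notation DM := (@dM R A Om d n).

Let sum3_perm (F : 'I_n -> 'I_n -> 'I_n -> C) :
  \sum_i \sum_j \sum_k F i j k = \sum_k \sum_j \sum_i F i j k.
Proof.
rewrite exchange_big /=; under eq_bigr do rewrite exchange_big /=.
by rewrite exchange_big.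
Qed.

Let conj_sum I r (P : pred I) (F : I -> C) :
  (\sum_(i <- r | P i) F i)^* = \sum_(i <- r | P i) (F i)^*.
Proof. exact: rmorph_sum. Qed.

Let WDl x y z : W (x + y) z = W x z + W y z.
Proof. rewrite /omega0 -big_split; apply: eq_bigr => i _; rewrite -big_split; apply: eq_bigr => j _.
by rewrite mxE omDl. Qed.
Let WDr x y z : W z (x + y) = W z x + W z y.
Proof. rewrite /omega0 -big_split; apply: eq_bigr => i _; rewrite -big_split; apply: eq_bigr => j _.
by rewrite mxE omDr. Qed.
Let WNl x z : W (- x) z = - W x z.
Proof. rewrite /omega0 -sumrN; apply: eq_bigr => i _; rewrite -sumrN; apply: eq_bigr => j _.
by rewrite mxE omNl. Qed.
Let WNr x z : W z (- x) = - W z x.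
Proof. rewrite /omega0 -sumrN; apply: eq_bigr => i _; rewrite -sumrN; apply: eq_bigr => j _.
by rewrite mxE omNr. Qed.
Let WC x y : W x y = (W y x)^*.
Proof. rewrite /omega0 conj_sum; apply: eq_bigr => i _; rewrite conj_sum; apply: eq_bigr => j _.
by rewrite omC. Qed.

Let W_LM u x y : in_k star u -> W (LM u x) y = - W x (LM u y).
Proof.
move=> hu; rewrite /omega0.
transitivity (\sum_i \sum_j \sum_k - omega (x k j) (la (u k i) (y i j))).
  apply: eq_bigr => i _; apply: eq_bigr => j _; rewrite mxE om_suml; apply: eq_bigr => k _.
  by rewrite om_la hu laNl omNr.
rewrite sum3_perm -sumrN; apply: eq_bigr => k _; rewrite -sumrN; apply: eq_bigr => j _.
by rewrite mxE om_sumr -sumrN.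
Qed.

Let W_RM u x y : in_k star u -> W (RM x u) y = - W x (RM y u).
Proof.
move=> hu; rewrite /omega0 -sumrN; apply: eq_bigr => i _.
transitivity (\sum_j \sum_k - omega (x i k) (ra (y i j) (u j k))).
  apply: eq_bigr => j _; rewrite mxE om_suml; apply: eq_bigr => k _.
  by rewrite om_ra hu raNr omNr.
rewrite exchange_big /= -sumrN; apply: eq_bigr => k _.
by rewrite mxE om_sumr -sumrN.
Qed.

Let LMDr u x y : LM u (x + y) = LM u x + LM u y.
Proof. apply/matrixP => i j; rewrite !mxE -big_split; apply: eq_bigr => k _; by rewrite mxE laDr. Qed.
Let LMNr u x : LM u (- x) = - LM u x.
Proof. apply/matrixP => i j; rewrite !mxE -sumrN; apply: eq_bigr => k _; by rewrite mxE laNr. Qed.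
Let LMBl u v x : LM (u - v) x = LM u x - LM v x.
Proof. apply/matrixP => i j; rewrite !mxE -sumrN -big_split; apply: eq_bigr => k _; by rewrite !mxE laDl laNl. Qed.
Let RMDl u x y : RM (x + y) u = RM x u + RM y u.
Proof. apply/matrixP => i j; rewrite !mxE -big_split; apply: eq_bigr => k _; by rewrite mxE raDl. Qed.
Let RMNl u x : RM (- x) u = - RM x u.
Proof. apply/matrixP => i j; rewrite !mxE -sumrN; apply: eq_bigr => k _; by rewrite mxE raNl. Qed.
Let RMBr u v x : RM x (u - v) = RM x u - RM x v.
Proof. apply/matrixP => i j; rewrite !mxE -sumrN -big_split; apply: eq_bigr => k _; by rewrite !mxE raDr raNr. Qed.
Let DMB u v : DM (u - v) = DM u - DM v.
Proof. by apply/matrixP => i j; rewrite !mxE dD dN. Qed.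

Let LMLM u v x : LM u (LM v x) = LM (u *m v) x.
Proof.
apply/matrixP => i j; rewrite !mxE.
under eq_bigr do rewrite mxE la_sumr.
rewrite exchange_big /=; apply: eq_bigr => l _; rewrite !mxE la_suml.
by apply: eq_bigr => k _; rewrite laM.
Qed.
Let RMRM u v x : RM (RM x u) v = RM x (u *m v).
Proof.
apply/matrixP => i j; rewrite !mxE.
under eq_bigr do rewrite mxE ra_suml.
rewrite exchange_big /=; apply: eq_bigr => l _; rewrite !mxE ra_sumr.
by apply: eq_bigr => k _; rewrite raM.
Qed.
Let LMRM u v x : LM u (RM x v) = RM (LM u x) v.
Proof.
apply/matrixP => i j; rewrite !mxE.
under eq_bigr do rewrite mxE la_sumr.
rewrite exchange_big /=; apply: eq_bigr => l _; rewrite !mxE ra_suml.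
by apply: eq_bigr => k _; rewrite lara.
Qed.
Let DMM u v : DM (u *m v) = RM (DM u) v + LM u (DM v).
Proof.
apply/matrixP => i j; rewrite !mxE d_sum -big_split; apply: eq_bigr => k _.
by rewrite dM' !mxE.
Qed.

Let etaD : forall a b, eta (a + b) = eta a + eta b. Proof. by case: heta. Qed.
Let etaC : forall f g, eta (f * g - g * f) =
         (- 1) / (2%:R * ('i)%C) * (omega (d f) (d (star g)) - omega (d g) (d (star f))).
Proof. by case: heta. Qed.
Let eta0 : eta 0 = 0.
Proof. by apply: (addrI (eta 0)); rewrite -etaD !addr0. Qed.
Let eta_sum I r (P : pred I) (F : I -> A) :
  eta (\sum_(i <- r | P i) F i) = \sum_(i <- r | P i) eta (F i).
Proof. exact: (big_morph eta etaD eta0). Qed.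

Let eta_tr u1 u2 : in_k star u1 -> in_k star u2 ->
  eta (\tr (commA u1 u2)) = ((S (DM u1) (DM u2))%:C)%C.
Proof.
move=> h1 h2; rewrite /in_k in h1 h2.
have -> : \tr (commA u1 u2) = \sum_i \sum_k (u1 i k * u2 k i - u2 k i * u1 i k).
  rewrite /commA /mxtrace; under eq_bigr do rewrite !mxE.
  under [RHS]eq_bigr do rewrite sumrB.
  rewrite !sumrB; congr (_ - _); by rewrite exchange_big.
set c := (-1 / (2%:R * 'i%C) : C).
have step : forall i k, eta (u1 i k * u2 k i - u2 k i * u1 i k) =
   c * (omega (d (u2 k i)) (d (u1 k i)) - omega (d (u1 i k)) (d (u2 i k))).
  by move=> i k; rewrite etaC h1 h2 !dN !omNr opprK addrC.
rewrite eta_sum (eq_bigr (fun i => c * (\sum_k omega (d (u2 k i)) (d (u1 k i))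
    - \sum_k omega (d (u1 i k)) (d (u2 i k))))); last first.
  move=> i _; rewrite eta_sum -sumrB mulr_sumr; apply: eq_bigr => k _; exact: step.
rewrite -mulr_sumr sumrB exchange_big /= /osymp -cst_im; congr (_ * (_ - _)).
  rewrite WC conjCK /omega0; apply: eq_bigr => k _.
  by apply: eq_bigr => i _; rewrite !mxE.
by rewrite /omega0; apply: eq_bigr => i _; apply: eq_bigr => k _; rewrite !mxE.
Qed.

Let laZr : forall (c : C) a x, la a (c *: x) = c *: la a x.
Proof. by case: hbim => [_ [_ [_ [_ [_ [_ [_ [_ [_ [h _]]]]]]]]]] c a x; case: (h c a x). Qed.
Let raZl : forall (c : C) a x, ra (c *: x) a = c *: ra x a.
Proof. by case: hbim => [_ [_ [_ [_ [_ [_ [_ [_ [_ [_ h]]]]]]]]]] c a x; case: (h c a x). Qed.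

Let SDl x y z : S (x + y) z = S x z + S y z.
Proof. by rewrite /osymp WDl ImD. Qed.
Let SDr x y z : S z (x + y) = S z x + S z y.
Proof. by rewrite /osymp WDr ImD. Qed.
Let SNl x z : S (- x) z = - S x z.
Proof. by rewrite /osymp WNl ImN. Qed.
Let SNr x z : S z (- x) = - S z x.
Proof. by rewrite /osymp WNr ImN. Qed.
Let Santi x y : S x y = - S y x.
Proof. by rewrite /osymp WC ImJ. Qed.
Let S_LM u x y : in_k star u -> S (LM u x) y = - S x (LM u y).
Proof. by move=> hu; rewrite /osymp W_LM // ImN. Qed.
Let S_RM u x y : in_k star u -> S (RM x u) y = - S x (RM y u).
Proof. by move=> hu; rewrite /osymp W_RM // ImN. Qed.

Let conj_real (t : R) : ((t%:C)%C)^* = (t%:C)%C.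
Proof. by apply/eqP; rewrite eq_complex /= oppr0 !eqxx. Qed.

Let SZl t x y : S (rscaleM t x) y = t * S x y.
Proof.
rewrite /osymp /omega0 -ImRM mulr_sumr; congr complex.Im; apply: eq_bigr => i _.
rewrite mulr_sumr; apply: eq_bigr => j _; by rewrite mxE omZl.
Qed.
Let SZr t x y : S x (rscaleM t y) = t * S x y.
Proof.
rewrite /osymp /omega0 -ImRM mulr_sumr; congr complex.Im; apply: eq_bigr => i _.
rewrite mulr_sumr; apply: eq_bigr => j _; by rewrite mxE omZr conj_real.
Qed.
Let LMZ u t x : LM u (rscaleM t x) = rscaleM t (LM u x).
Proof.
apply/matrixP => i j; rewrite !mxE scaler_sumr; apply: eq_bigr => k _; by rewrite mxE laZr.
Qed.
Let RMZ u t x : RM (rscaleM t x) u = rscaleM t (RM x u).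
Proof.
apply/matrixP => i j; rewrite !mxE scaler_sumr; apply: eq_bigr => k _; by rewrite mxE raZl.
Qed.

Let partii u1 u2 a : in_k star u1 -> in_k star u2 ->
  ((S (Xvf la ra d u1 a) (Xvf la ra d u2 a))%:C)%C = Ham la ra d omega eta (commA u1 u2) a.
Proof.
move=> h1 h2.
rewrite /Ham eta_tr // cplx3; apply: f_equal.
rewrite /Xvf /brkUM /brkMU /commA DMB !DMM !LMBl !RMBr -!LMLM -!RMRM.
rewrite !(SDl, SDr, SNl, SNr).
have f1 := S_RM u2 (DM u1) a h2; have f1' := Santi a (RM (DM u1) u2).
have f2 := S_LM u1 (DM u2) a h1; have f2' := Santi a (LM u1 (DM u2)); have f2'' := Santi (DM u2) (LM u1 a).
have f3 := S_RM u1 (DM u2) a h1; have f3' := Santi a (RM (DM u2) u1); have f3'' := Santi (DM u2) (RM a u1).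
have f4 := S_LM u2 (DM u1) a h2; have f4' := Santi a (LM u2 (DM u1)).
have q1 := S_LM u1 a (LM u2 a) h1.
have q2 := S_LM u1 a (RM a u2) h1; rewrite LMRM in q2.
have q3 := S_RM u1 a (LM u2 a) h1.
have q4 := S_RM u1 a (RM a u2) h1.
have z1 := S_RM u2 (LM u1 a) a h2; have z1' := Santi a (RM (LM u1 a) u2).
have z2 := S_LM u2 a (RM a u1) h2; rewrite LMRM in z2.
have z2' := S_RM u1 (LM u2 a) a h1; have z2'' := Santi a (RM (LM u2 a) u1).
have p1 := S_LM u2 a (LM u1 a) h2; have p2 := Santi (LM u1 a) (LM u2 a).
have r1 := S_RM u2 a (RM a u1) h2; have r2 := Santi (RM a u1) (RM a u2).
lra.
Qed.

Let parti u a b : in_k star u ->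
  is_derive (0 : R) (1 : R)
    (fun t : R => complex.Re (Ham la ra d omega eta u (a + rscaleM t b)))
    (S (Xvf la ra d u a) b) /\
  is_derive (0 : R) (1 : R)
    (fun t : R => complex.Im (Ham la ra d omega eta u (a + rscaleM t b)))
    (0 : R).
Proof.
move=> hu; split.
  have -> : (fun t : R => complex.Re (Ham la ra d omega eta u (a + rscaleM t b))) =
    (fun t : R => (complex.Re (eta (\tr u)) - S a (DM u) + S a (RM a u - LM u a) / 2)
       + t * (- S b (DM u) + (S a (RM b u - LM u b) + S b (RM a u - LM u a)) / 2)
       + t * t * (S b (RM b u - LM u b) / 2)).
    apply/funext => t; rewrite /Ham /brkMU ReH RMDl LMDr RMZ LMZ.
    rewrite !(SDl, SDr, SNl, SNr, SZl, SZr).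
    ring.
  apply: polyd'.
  rewrite /Xvf /brkUM !(SDl, SDr, SNl, SNr).
  have f1 := Santi b (DM u).
  have f2 := S_LM u a b hu; have f2' := Santi b (LM u a).
  have f3 := S_RM u a b hu; have f3' := Santi b (RM a u).
  lra.
have -> : (fun t : R => complex.Im (Ham la ra d omega eta u (a + rscaleM t b))) =
    cst (complex.Im (eta (\tr u))).
  by apply/funext => t; rewrite /Ham ImH.
exact: is_derive_cst.
Qed.

Lemma main_sec :
  (forall (u : 'M[A]_n) (a b : 'M[Om]_n), in_k star u ->
     is_derive (0 : R) (1 : R)
       (fun t : R => complex.Re (Ham la ra d omega eta u (a + rscaleM t b)))
       (osymp omega (Xvf la ra d u a) b) /\
     is_derive (0 : R) (1 : R)
       (fun t : R => complex.Im (Ham la ra d omega eta u (a + rscaleM t b)))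
       (0 : R)) /\
  (forall (u1 u2 : 'M[A]_n) (a : 'M[Om]_n), in_k star u1 -> in_k star u2 ->
     ((osymp omega (Xvf la ra d u1 a) (Xvf la ra d u2 a))%:C)%C
       = Ham la ra d omega eta (commA u1 u2) a).
Proof. split; [exact: parti | exact: partii]. Qed.

End Main.

Theorem mainTheorem2 (R : realType) (A : algType R[i]) (star : A -> A)
  (Om : lmodType R[i]) (la : A -> Om -> Om) (ra : Om -> A -> Om) (d : A -> Om)
  (omega : Om -> Om -> R[i]) (eta : A -> R[i]) (n : nat)
  (hstar : is_star star) (hbim : is_bimodule la ra)
  (hd : is_derivation la ra d) (hom : is_omega star la ra omega)
  (heta : is_eta star d omega eta) (hn : (1 <= n)%N) :
  (forall (u : 'M[A]_n) (a b : 'M[Om]_n), in_k star u ->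
     is_derive (0 : R) (1 : R)
       (fun t : R => complex.Re (Ham la ra d omega eta u (a + rscaleM t b)))
       (osymp omega (Xvf la ra d u a) b) /\
     is_derive (0 : R) (1 : R)
       (fun t : R => complex.Im (Ham la ra d omega eta u (a + rscaleM t b)))
       (0 : R)) /\
  (forall (u1 u2 : 'M[A]_n) (a : 'M[Om]_n), in_k star u1 -> in_k star u2 ->
     ((osymp omega (Xvf la ra d u1 a) (Xvf la ra d u2 a))%:C)%C
       = Ham la ra d omega eta (commA u1 u2) a).
Proof. exact: main_sec. Qed.
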